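(* Let $D=\{(x_n,y_n)\}_{n=0}^N$ with $x_0<x_1<\dots<x_N$, $I=[x_0,x_N]$, and $\mathcal{J}_D:=\{f\in\mathcal{C}(I): f(x_n)=y_n,\ n=0,\dots,N\}$. For $n=1,\dots,N$ let $L_n$ be the affine map with $L_n(x_0)=x_{n-1}$, $L_n(x_N)=x_n$, and let $\alpha_n,q_n\in\mathcal{C}(I)$ satisfy $\Lambda:=\max_n\|\alpha_n\|_\infty<1$ and the join-up conditions $\alpha_n(x_0)y_0+q_n(x_0)=y_{n-1}$, $\alpha_n(x_N)y_N+q_n(x_N)=y_n$. Define $\widehat{T}:\mathcal{J}_D\to\mathcal{J}_D$ by $\widehat{T}f(x):=\alpha_n(L_n^{-1}(x))\,f(L_n^{-1}(x))+q_n(L_n^{-1}(x))$ for $x\in[x_{n-1},x_n]$, $n=1,\dots,N$. Then $\widehat{T}$ can be extended to a continuous operator $\overline{T}:\mathcal{C}(I)\to\mathcal{J}_D$ (i.e. $\overline{T}|_{\mathcal{J}_D}=\widehat{T}$).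
   Context: $\mathcal{C}(I)$ denotes the Banach space of continuous real functions on $I$ with the supremum norm, and $\mathcal{J}_D$ carries the induced metric. *)

(* Defs.v *)
From mathcomp Require Import all_boot all_order all_algebra.
From mathcomp Require Import all_classical all_reals all_analysis.
Set Implicit Arguments. Unset Strict Implicit. Unset Printing Implicit Defensive.
Import Order.TTheory GRing.Theory Num.Theory numFieldNormedType.Exports.
Local Open Scope classical_set_scope.
Local Open Scope ring_scope.

(* Elements of C([a,b]) are represented by functions R -> R that are
   continuous on [a,b]; values outside [a,b] are irrelevant. *)
Definition CI (R : realType) (a b : R) (f : R -> R) : Prop :=
  {within `[a, b], continuous (f : R -> R)}.

Definition supnorm (R : realType) (a b : R) (f : R -> R) : R :=
  sup [set `|f t| | t in `[a, b]].

Definition JD (R : realType) (N : nat) (x y : nat -> R) (f : R -> R) : Prop :=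
  CI (x 0%N) (x N) f /\ forall n : nat, (n <= N)%N -> f (x n) = y n.

Definition Lmap (R : realType) (N : nat) (x : nat -> R) (n : nat) (t : R) : R :=
  x n.-1 + (x n - x n.-1) / (x N - x 0%N) * (t - x 0%N).

Definition Linv (R : realType) (N : nat) (x : nat -> R) (n : nat) (t : R) : R :=
  x 0%N + (x N - x 0%N) / (x n - x n.-1) * (t - x n.-1).

Definition Lambda (R : realType) (N : nat) (x : nat -> R) (alpha : nat -> R -> R) : R :=
  \big[Num.max/0]_(1 <= n < N.+1) supnorm (x 0%N) (x N) (alpha n).

(* Main.v *)
Require Import Defs.
From mathcomp Require Import all_boot all_order all_algebra.
From mathcomp Require Import all_classical all_reals all_analysis.
From mathcomp Require Import ring lra.
Import Order.TTheory GRing.Theory Num.Theory numFieldNormedType.Exports.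
Local Open Scope classical_set_scope.
Local Open Scope ring_scope.

Section Clamp.
Context {R : realType}.
Definition clamp (a b t : R) := Num.max a (Num.min t b).

Lemma clamp_cont a b : continuous (clamp a b).
Proof.
move=> t. rewrite /clamp. apply: (@continuous_max R R (cst a) (fun t => Num.min t b)); first exact: cvg_cst.
by apply: continuous_min; [exact: cvg_id | exact: cvg_cst].
Qed.

Lemma clamp_in a b t : a <= b -> a <= clamp a b t <= b.
Proof.
move=> ab; rewrite /clamp; apply/andP; split; first by rewrite le_max lexx.
by rewrite ge_max ab ge_min lexx orbT.
Qed.

Lemma clamp_id a b t : a <= t <= b -> clamp a b t = t.
Proof. by case/andP=> h1 h2; rewrite /clamp (min_l h2) (max_r h1). Qed.

Lemma clamp_lo a b t : a <= b -> t <= a -> clamp a b t = a.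
Proof. by move=> ab ta; rewrite /clamp (min_l (le_trans ta ab)) (max_l ta). Qed.

Lemma clamp_hi a b t : a <= b -> b <= t -> clamp a b t = b.
Proof. by move=> ab bt; rewrite /clamp (min_r bt) (max_r ab). Qed.

Lemma comp_clamp (f : R -> R) a b : a <= b ->
  {within `[a, b], continuous f} -> continuous (f \o clamp a b).
Proof.
move=> ab /subspace_continuousP fc t.
have ct : clamp a b z @[z --> t] --> within `[a, b] (nbhs (clamp a b t)).
  move=> P HP.
  have H : \forall z \near t, (clamp a b z \in `[a, b] -> P (clamp a b z)).
    exact: (@clamp_cont a b t _ HP).
  suff : \forall z \near t, P (clamp a b z) by [].
  move: H; apply: filterS => z /=; apply; rewrite /= in_itv /=. exact: clamp_in.
apply: cvg_comp ct _; apply: fc; rewrite /= in_itv /=; exact: clamp_in.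
Qed.

Lemma ccomp (g h : R -> R) : continuous g -> continuous h ->
  continuous (fun t => g (h t)).
Proof. by move=> gc hc t; exact: (continuous_comp (hc t) (gc (h t))). Qed.

Lemma CI_bound (f : R -> R) a b : a <= b -> {within `[a, b], continuous f} ->
  forall t, a <= t <= b -> `|f t| <= sup [set `|f t| | t in `[a, b]].
Proof.
move=> ab fc t tab; apply: ub_le_sup; last first.
  by exists t => //; rewrite /= in_itv /=.
have : {within `[a, b], continuous (fun t => `|f t|)}.
  apply/subspace_continuousP => c cin; apply: cvg_norm.
  by move/subspace_continuousP: fc; apply.
case/(EVT_max ab) => c cin hc; exists `|f c|; move=> _ [s sin <-].
by apply: hc.
Qed.

Lemma sum_cont (h : nat -> R -> R) k :
  (forall n, (1 <= n <= k)%N -> continuous (h n)) ->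
  continuous (fun t => \sum_(1 <= n < k.+1) h n t).
Proof.
elim: k => [|k IH] hc.
  have -> : (fun t => \sum_(1 <= n < 1) h n t) = cst 0.
    by apply/funext => t; rewrite big_geq.
  by move=> t; exact: cvg_cst.
have -> : (fun t => \sum_(1 <= n < k.+2) h n t) =
  (fun t => \sum_(1 <= n < k.+1) h n t) + h k.+1.
  by apply/funext => t; rewrite big_nat_recr.
move=> t; apply: cvgD; last by apply: hc; rewrite leqnn.
apply: IH => // n /andP[n1 nk] ; apply: hc; rewrite n1 /=; exact: leqW.
Qed.
End Clamp.

Section Main.
Variables (R : realType) (N : nat) (x y : nat -> R) (alpha q : nat -> R -> R).
Hypothesis hx : forall n : nat, (n < N)%N -> x n < x n.+1.
Hypothesis halpha : forall n : nat, (1 <= n <= N)%N -> CI (x 0%N) (x N) (alpha n).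
Hypothesis hq : forall n : nat, (1 <= n <= N)%N -> CI (x 0%N) (x N) (q n).
Hypothesis hjoin0 : forall n : nat, (1 <= n <= N)%N ->
     alpha n (x 0%N) * y 0%N + q n (x 0%N) = y n.-1.
Hypothesis hjoinN : forall n : nat, (1 <= n <= N)%N ->
     alpha n (x N) * y N + q n (x N) = y n.

Lemma xmono i j : (i <= j <= N)%N -> x i <= x j.
Proof.
move=> /andP[ij jN]; elim: j ij jN => [|j IH] ij jN.
  by rewrite leqn0 in ij; move/eqP: ij => ->.
rewrite leq_eqVlt in ij; case/orP: ij => [/eqP->//|ij].
rewrite ltnS in ij.
apply: le_trans (IH ij (ltnW jN)) _; exact/ltW/hx.
Qed.

Lemma xstep n : (1 <= n <= N)%N -> x n.-1 < x n.
Proof.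
move=> /andP[n1 nN]; have h : (n.-1 < N)%N by rewrite prednK.
by have := hx _ h; rewrite prednK.
Qed.

Lemma x0N : x 0%N <= x N.
Proof. by apply: xmono; rewrite leqnn. Qed.

Definition cI u := clamp (x 0%N) (x N) u.

Lemma cI_in u : x 0%N <= cI u <= x N.
Proof. apply: clamp_in; exact: x0N. Qed.

Definition Pf (f : R -> R) u := f (cI u)
  + (y 0%N - f (x 0%N)) * ((x N - cI u) / (x N - x 0%N))
  + (y N - f (x N)) * ((cI u - x 0%N) / (x N - x 0%N)).

Definition G f n s := alpha n (cI (Linv N x n s)) * Pf f (Linv N x n s)
  + q n (cI (Linv N x n s)).

Definition Tb f t := y 0%N + \sum_(1 <= n < N.+1)
  (G f n (clamp (x n.-1) (x n) t) - G f n (x n.-1)).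

Lemma Npos n : (1 <= n <= N)%N -> x 0%N < x N.
Proof.
move=> /andP[n1 nN]; apply: (le_lt_trans _ (@xstep N _)).
  by apply: xmono; rewrite leq0n /= leq_pred.
by rewrite (leq_trans n1 nN) leqnn.
Qed.

Lemma Pf_x0 f n : (1 <= n <= N)%N -> Pf f (x 0%N) = y 0%N.
Proof.
move=> hn; have lt := Npos _ hn.
have nz : x N - x 0%N != 0 by rewrite subr_eq0 gt_eqF.
rewrite /Pf /cI clamp_id ?lexx ?x0N // divff // subrr mul0r; ring.
Qed.

Lemma Pf_xN f n : (1 <= n <= N)%N -> Pf f (x N) = y N.
Proof.
move=> hn; have lt := Npos _ hn.
have nz : x N - x 0%N != 0 by rewrite subr_eq0 gt_eqF.
rewrite /Pf /cI clamp_id ?lexx ?x0N // divff // subrr mul0r; ring.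
Qed.

Lemma G_lo f n : (1 <= n <= N)%N -> G f n (x n.-1) = y n.-1.
Proof.
move=> hn; rewrite /G /Linv subrr mulr0 addr0.
have -> : cI (x 0%N) = x 0%N by rewrite /cI clamp_id ?lexx ?x0N.
by rewrite (Pf_x0 _ _ hn) hjoin0.
Qed.

Lemma G_hi f n : (1 <= n <= N)%N -> G f n (x n) = y n.
Proof.
move=> hn; have := xstep _ hn => lt.
have nz : x n - x n.-1 != 0 by rewrite subr_eq0 gt_eqF.
rewrite /G /Linv mulfVK // subrKC.
have -> : cI (x N) = x N by rewrite /cI clamp_id ?lexx ?x0N.
by rewrite (Pf_xN _ _ hn) hjoinN.
Qed.

Lemma tele f m t : (1 <= m <= N)%N -> x m.-1 <= t <= x m -> Tb f t = G f m t.
Proof.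
move=> /andP[m1 mN] /andP[t1 t2].
have key : forall k, (k <= N)%N ->
  \sum_(1 <= n < k.+1) (G f n (clamp (x n.-1) (x n) t) - G f n (x n.-1)) =
  if (k < m)%N then y k - y 0%N else G f m t - y 0%N.
  elim=> [|k IH] kN.
    by rewrite big_geq // m1 subrr.
  rewrite big_nat_recr //= IH ?(ltnW kN) //.
  have hk : (1 <= k.+1 <= N)%N by rewrite kN.
  case: (ltngtP k.+1 m) => h.
  - have H : x k.+1 <= t.
      apply: le_trans t1; apply: xmono; apply/andP; split.
        by rewrite -ltnS prednK ?(leq_trans _ h).
      exact: leq_trans (leq_pred m) mN.
    rewrite (clamp_hi _ _ _ (ltW (hx _ kN)) H) (G_hi f _ hk) (G_lo f _ hk) /=; ring.
  - have H : t <= x k.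
      apply: le_trans t2 _; apply: xmono; by rewrite -ltnS h (ltnW kN).
    by rewrite (clamp_lo _ _ _ (ltW (hx _ kN)) H) subrr addr0.
  - rewrite -h clamp_id; last by rewrite -h in t1 t2; rewrite t1 t2.
    have := G_lo f _ hk; rewrite /= => ->; ring.
by rewrite /Tb key // ltnNge mN /= subrKC.
Qed.

Lemma Linv_in n t : (1 <= n <= N)%N -> x n.-1 <= t <= x n ->
  x 0%N <= Linv N x n t <= x N.
Proof.
move=> hn /andP[t1 t2]; have lt := xstep _ hn.
have d0 : 0 < x n - x n.-1 by rewrite subr_gt0.
set r := (t - x n.-1) / (x n - x n.-1).
have -> : Linv N x n t = x 0%N + (x N - x 0%N) * r.
  by rewrite /Linv /r mulrAC -mulrA.
have r0 : 0 <= r by rewrite /r divr_ge0 // ?subr_ge0 // ltW.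
have r1 : r <= 1 by rewrite /r ler_pdivrMr // mul1r; lra.
have := x0N => h0; apply/andP; split; nra.
Qed.


Lemma Linv_cont n : continuous (Linv N x n).
Proof.
move=> t; rewrite /Linv; apply: cvgD; first exact: cvg_cst.
apply: cvgM; first exact: cvg_cst.
by apply: cvgB; [exact: cvg_id | exact: cvg_cst].
Qed.

Lemma cIcomp (h : R -> R) : CI (x 0%N) (x N) h -> continuous (fun u => h (cI u)).
Proof. move=> hc; exact: (comp_clamp _ _ _ x0N hc). Qed.

Lemma cI_cont : continuous cI.
Proof. exact: clamp_cont. Qed.

Lemma Pf_cont f : CI (x 0%N) (x N) f -> continuous (Pf f).
Proof.
move=> fc u; rewrite /Pf; apply: cvgD; [apply: cvgD|].
- exact: cIcomp fc u.
- apply: cvgM; first exact: cvg_cst.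
  by apply: cvgM; [apply: cvgB; [exact: cvg_cst | exact: cI_cont] | exact: cvg_cst].
- apply: cvgM; first exact: cvg_cst.
  by apply: cvgM; [apply: cvgB; [exact: cI_cont | exact: cvg_cst] | exact: cvg_cst].
Qed.

Lemma G_cont f n : (1 <= n <= N)%N -> CI (x 0%N) (x N) f -> continuous (G f n).
Proof.
move=> hn fc u; rewrite /G; apply: cvgD; [apply: cvgM|].
- exact: (ccomp _ _ (cIcomp _ (halpha _ hn)) (Linv_cont n) u).
- exact: (ccomp _ _ (Pf_cont _ fc) (Linv_cont n) u).
- exact: (ccomp _ _ (cIcomp _ (hq _ hn)) (Linv_cont n) u).
Qed.

Lemma Tb_cont f : CI (x 0%N) (x N) f -> continuous (Tb f).
Proof.
move=> fc t; rewrite /Tb; apply: cvgD; first exact: cvg_cst.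
apply: (@sum_cont R (fun n t => G f n (clamp (x n.-1) (x n) t) - G f n (x n.-1)) N).
move=> n hn u; apply: cvgB; last exact: cvg_cst.
exact: (ccomp _ _ (G_cont _ _ hn fc) (clamp_cont _ _) u).
Qed.

Lemma alpha_bd : exists2 M, 0 <= M & forall n, (1 <= n <= N)%N ->
  forall u, x 0%N <= u <= x N -> `|alpha n u| <= M.
Proof.
suff: forall k, exists2 M, 0 <= M & forall n, (1 <= n <= k)%N -> (n <= N)%N ->
  forall u, x 0%N <= u <= x N -> `|alpha n u| <= M.
  case/(_ N) => M M0 HM; exists M => // n hn; apply: HM => //; by case/andP: hn.
elim=> [|k [M M0 HM]].
  exists 0 => // n /andP[n1 n0]; by have := leq_trans n1 n0.
exists (Num.max M (supnorm (x 0%N) (x N) (alpha k.+1))).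
  by rewrite le_max M0.
move=> n /andP[n1 nk] nN u hu; rewrite leq_eqVlt in nk; case/orP: nk => [/eqP e | nk].
  subst n; apply: le_trans (@CI_bound _ (alpha k.+1) _ _ x0N (halpha _ _) u hu) _.
    by rewrite nN.
  by rewrite /supnorm le_max lexx orbT.
apply: le_trans (HM n _ nN u hu) _; first by rewrite n1 -ltnS.
by rewrite le_max lexx.
Qed.

Lemma wb p : 0 <= p <= x N - x 0%N -> `|p / (x N - x 0%N)| <= 1.
Proof.
case/andP=> p0 p1.
case: (eqVneq (x N - x 0%N) 0) => [->|nz]; first by rewrite invr0 mulr0 normr0.
have pos : 0 < x N - x 0%N by rewrite lt_def nz subr_ge0 x0N.
rewrite ger0_norm; last by rewrite divr_ge0 // ltW.
by rewrite ler_pdivrMr // mul1r.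
Qed.

Lemma Pf_diff f g s : (forall v, x 0%N <= v <= x N -> `|f v - g v| <= s) ->
  forall u, `|Pf f u - Pf g u| <= 3 * s.
Proof.
move=> hs u; set c := cI u.
set w1 := (x N - c) / (x N - x 0%N); set w2 := (c - x 0%N) / (x N - x 0%N).
have E : Pf f u - Pf g u = (f c - g c) + (g (x 0%N) - f (x 0%N)) * w1
   + (g (x N) - f (x N)) * w2 by rewrite /Pf -/c -/w1 -/w2; ring.
have cin := cI_in u; rewrite -/c in cin; case/andP: (cin) => c1 c2.
have x0in : x 0%N <= x 0%N <= x N by rewrite lexx x0N.
have xNin : x 0%N <= x N <= x N by rewrite lexx x0N.
have w1b : `|w1| <= 1 by apply: wb; rewrite subr_ge0 c2 lerD2l lerN2 c1.
have w2b : `|w2| <= 1 by apply: wb; rewrite subr_ge0 c1 lerD2r c2.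
clearbody c w1 w2.
have h1 := hs c cin.
have h2 : `|g (x 0%N) - f (x 0%N)| <= s by rewrite distrC; exact: hs.
have h3 : `|g (x N) - f (x N)| <= s by rewrite distrC; exact: hs.
have k2 : `|g (x 0%N) - f (x 0%N)| * `|w1| <= s * 1 by apply: ler_pM.
have k3 : `|g (x N) - f (x N)| * `|w2| <= s * 1 by apply: ler_pM.
rewrite E; apply: le_trans (ler_normD _ _) _.
apply: le_trans (lerD (ler_normD _ _) (lexx _)) _; rewrite !normrM; lra.
Qed.

Lemma G_diff f g s M n : (1 <= n <= N)%N ->
  (forall n, (1 <= n <= N)%N -> forall u, x 0%N <= u <= x N -> `|alpha n u| <= M) ->
  (forall v, x 0%N <= v <= x N -> `|f v - g v| <= s) ->
  forall u, `|G f n u - G g n u| <= M * (3 * s).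
Proof.
move=> hn HM hs u.
have -> : G f n u - G g n u = alpha n (cI (Linv N x n u)) *
  (Pf f (Linv N x n u) - Pf g (Linv N x n u)) by rewrite /G; ring.
rewrite normrM; apply: ler_pM => //; first exact: HM (cI_in _).
exact: Pf_diff.
Qed.

Lemma Tb_diff f g s M :
  (forall n, (1 <= n <= N)%N -> forall u, x 0%N <= u <= x N -> `|alpha n u| <= M) ->
  (forall v, x 0%N <= v <= x N -> `|f v - g v| <= s) ->
  forall t, `|Tb f t - Tb g t| <= \sum_(1 <= n < N.+1) (2 * (M * (3 * s))).
Proof.
move=> HM hs t.
have -> : forall a A B : R, (a + A) - (a + B) = A - B by move=> *; ring.
rewrite -sumrB; apply: le_trans (ler_norm_sum _ _ _) _.
apply: ler_sum_nat => n; rewrite ltnS => hn.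
set a := G f n _; set b := G f n (x n.-1); set c := G g n _; set d := G g n (x n.-1).
have -> : a - b - (c - d) = (a - c) - (b - d) by ring.
have k1 : `|a - c| <= M * (3 * s) by exact: G_diff.
have k2 : `|b - d| <= M * (3 * s) by exact: G_diff.
apply: le_trans (ler_normB _ _) _; lra.
Qed.


Lemma main_sec : exists Tbar : (R -> R) -> (R -> R),
    (forall f, CI (x 0%N) (x N) f -> JD N x y (Tbar f)) /\
    (forall f, CI (x 0%N) (x N) f -> forall eps : R, 0 < eps ->
       exists2 delta : R, 0 < delta &
         forall g, CI (x 0%N) (x N) g ->
           supnorm (x 0%N) (x N) (f \- g) < delta ->
           supnorm (x 0%N) (x N) (Tbar f \- Tbar g) < eps) /\
    (forall f, JD N x y f ->
       forall n : nat, (1 <= n <= N)%N ->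
       forall t, x n.-1 <= t <= x n ->
         Tbar f t = alpha n (Linv N x n t) * f (Linv N x n t)
                    + q n (Linv N x n t)).
Proof.
exists Tb; split; [|split].
- move=> f fc; split; first exact: continuous_subspaceT (Tb_cont _ fc).
  move=> k kN; case: (eqVneq N 0%N) => [N0|Nn0].
    have k0 : k = 0%N by apply/eqP; rewrite -leqn0 -N0.
    by subst k; rewrite /Tb big_geq ?N0 // addr0.
  have Npos0 : (0 < N)%N by rewrite lt0n.
  case: (eqVneq k 0%N) => [k0|kn0].
    subst k.
    have h1 : (1 <= 1 <= N)%N by rewrite leqnn Npos0.
    have ht : x (1%N.-1) <= x 0%N <= x 1%N by rewrite lexx /= ltW // hx.
    rewrite (tele f _ _ h1 ht); exact: (G_lo f _ h1).
  have hk : (1 <= k <= N)%N by rewrite lt0n kn0 kN.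
  have ht : x k.-1 <= x k <= x k by rewrite lexx ltW // xstep.
  rewrite (tele f _ _ hk ht); exact: (G_hi f _ hk).
- move=> f fc eps e0; have [M M0 HM] := alpha_bd.
  set K := \sum_(1 <= n < N.+1) (2 * (M * 3)).
  have K0 : 0 <= K by apply: sumr_ge0 => n _; rewrite !mulr_ge0.
  have K1 : 0 < K + 1 by lra.
  exists (eps / (K + 1)); first by rewrite divr_gt0.
  move=> g gc hs; set s := supnorm (x 0%N) (x N) (f \- g).
  have fgc : CI (x 0%N) (x N) (f \- g).
    apply/subspace_continuousP => c cin; apply: cvgB.
      by move/subspace_continuousP: fc; apply.
    by move/subspace_continuousP: gc; apply.
  have pw : forall v, x 0%N <= v <= x N -> `|f v - g v| <= s.
    move=> v hv; exact: (@CI_bound _ (f \- g) _ _ x0N fgc v hv).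
  have bd : forall t, `|Tb f t - Tb g t| <= K * s.
    move=> t; apply: le_trans (Tb_diff _ _ _ _ HM pw t) _.
    by rewrite /K mulr_suml; apply: ler_sum => n _; rewrite -!mulrA.
  have sb : supnorm (x 0%N) (x N) (Tb f \- Tb g) <= K * s.
    rewrite /supnorm; apply: ge_sup.
      exists (`|(Tb f \- Tb g) (x 0%N)|); exists (x 0%N) => //.
      by rewrite /= in_itv /= lexx x0N.
    by move=> _ [t _ <-]; exact: bd.
  have s1 : K * s <= K * (eps / (K + 1)).
    by apply: ler_wpM2l => //; exact: ltW.
  have s2 : K * (eps / (K + 1)) < eps.
    rewrite mulrA ltr_pdivrMr //; nra.
  lra.
- move=> f [fc fy] n hn t ht; rewrite (tele f _ _ hn ht) /G.
  have L := Linv_in _ _ hn ht.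
  have cL : cI (Linv N x n t) = Linv N x n t by rewrite /cI clamp_id.
  rewrite cL /Pf cL (fy 0%N) // (fy N) // !subrr !mul0r !addr0.
done.
Qed.

End Main.


Theorem theorem4p3 (R : realType) (N : nat) (x y : nat -> R)
  (alpha q : nat -> R -> R)
  (hx : forall n : nat, (n < N)%N -> x n < x n.+1)
  (halpha : forall n : nat, (1 <= n <= N)%N -> CI (x 0%N) (x N) (alpha n))
  (hq : forall n : nat, (1 <= n <= N)%N -> CI (x 0%N) (x N) (q n))
  (hLambda : Lambda N x alpha < 1)
  (hjoin0 : forall n : nat, (1 <= n <= N)%N ->
     alpha n (x 0%N) * y 0%N + q n (x 0%N) = y n.-1)
  (hjoinN : forall n : nat, (1 <= n <= N)%N ->
     alpha n (x N) * y N + q n (x N) = y n) :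
  exists Tbar : (R -> R) -> (R -> R),
    (* Tbar maps C(I) into J_D *)
    (forall f, CI (x 0%N) (x N) f -> JD N x y (Tbar f)) /\
    (* Tbar is continuous for the sup-norm metric on C(I) and J_D *)
    (forall f, CI (x 0%N) (x N) f -> forall eps : R, 0 < eps ->
       exists2 delta : R, 0 < delta &
         forall g, CI (x 0%N) (x N) g ->
           supnorm (x 0%N) (x N) (f \- g) < delta ->
           supnorm (x 0%N) (x N) (Tbar f \- Tbar g) < eps) /\
    (* Tbar restricted to J_D is That *)
    (forall f, JD N x y f ->
       forall n : nat, (1 <= n <= N)%N ->
       forall t, x n.-1 <= t <= x n ->
         Tbar f t = alpha n (Linv N x n t) * f (Linv N x n t)
                    + q n (Linv N x n t)).
Proof. exact: (@main_sec R N x y alpha q hx halpha hq hjoin0 hjoinN). Qed.
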